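(* Let $\mu>0$ and $k>0$. The function $T_l:(x_l,1)\to(0,+\infty)$ defined in the context is continuous, strictly decreasing, and satisfies: (i) $\displaystyle\lim_{x\to1^-}T_l(x)=\frac{1}{\sqrt{\mu}}\arctan\frac{k}{\sqrt{\mu}}$; (ii) $\displaystyle\lim_{x\to x_l^+}T_l(x)=+\infty$.
   Context: Let $G(u)=u^3/3-u^4/4$ for $u\in[0,1]$ (a primitive of $g(u)=u^2(1-u)$). Let $y(x)=-k(1-x)$ for $x\in(0,1)$ and let $x_l\in(0,1)$ be the abscissa of the unique intersection, in $(0,1)$, of the line $v=y(u)$ with the curve $v^2=2\mu G(u)$, $v<0$. For $x\in(x_l,1)$ one has $y(x)^2<2\mu G(x)$, and $m(x)$ denotes the unique number in $(0,x)$ with $2\mu G(m(x))=2\mu G(x)-y(x)^2$. Define $$T_l(x)=\int_{m(x)}^{x}\frac{du}{\sqrt{y(x)^2+2\mu(G(u)-G(x))}},\qquad x\in(x_l,1).$$ *)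

(* Defs.v *)
From Stdlib Require Import Reals Lra ClassicalEpsilon.
From Coquelicot Require Import Coquelicot.
Open Scope R_scope.

(* G(u) = u^3/3 - u^4/4, primitive of g(u) = u^2 (1-u). *)
Definition G (u : R) : R := u ^ 3 / 3 - u ^ 4 / 4.

Definition yk (k x : R) : R := - k * (1 - x).

Definition x_l (mu k : R) : R :=
  epsilon (inhabits 0)
    (fun u => 0 < u < 1 /\ yk k u < 0 /\ (yk k u) ^ 2 = 2 * mu * G u).

Definition m_of (mu k x : R) : R :=
  epsilon (inhabits 0)
    (fun m => 0 < m < x /\ 2 * mu * G m = 2 * mu * G x - (yk k x) ^ 2).

Definition integrand (mu k x u : R) : R :=
  / sqrt ((yk k x) ^ 2 + 2 * mu * (G u - G x)).

(* T_l(x) = int_{m(x)}^{x} du / sqrt(y(x)^2 + 2 mu (G(u) - G(x))),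
   an improper Riemann integral (singular at the lower end m(x)). *)
Definition T_l (mu k x : R) : R :=
  RInt_gen (integrand mu k x) (at_right (m_of mu k x)) (at_point x).

(* Main.v *)
Require Import Defs.
From Stdlib Require Import Reals Lra Psatz ClassicalEpsilon Ranalysis5.
From Coquelicot Require Import Coquelicot.
Open Scope R_scope.
Set Bullet Behavior "Strict Subproofs".

Definition gg (u : R) : R := u ^ 2 * (1 - u).

Lemma G_lower a b : 0 <= a -> a <= b -> b <= 1 ->
  G b - G a >= a^2*(1-b)*(b-a) + (b-a)^3/12.
Proof. intros.
 assert (E: G b - G a - a^2*(1-b)*(b-a) = (b-a)^2 * ((b-a)*(1/3 - (b-a)/4) + a*(1-(b-a)-a/2))) by (unfold G; field).
 assert (0 <= (b-a)^2) by nra.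
 assert (0 <= a*(1-(b-a)-a/2)) by nra.
 assert ((b-a)^2 * ((b-a)*(1/3 - (b-a)/4) + a*(1-(b-a)-a/2)) >= (b-a)^3/12).
 { assert (0 <= (b-a)^2 * (a*(1-(b-a)-a/2))) by nra.
   assert ((b-a)^2 * ((b-a)*(1/3 - (b-a)/4)) >= (b-a)^3/12).
   { assert (0 <= (b-a)^3) by (apply pow_le; lra). nra. } nra. }
 lra. Qed.

Lemma G_lt a b : 0 <= a -> a < b -> b <= 1 -> G a < G b.
Proof. intros. pose proof (G_lower a b). assert (0 <= a^2*(1-b)*(b-a)).
 { apply Rmult_le_pos; [apply Rmult_le_pos|]; try lra. apply pow2_ge_0. }
 assert (0 < (b-a)^3) by (apply pow_lt; lra). lra. Qed.

Lemma G_le a b : 0 <= a -> a <= b -> b <= 1 -> G a <= G b.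
Proof. intros. destruct (Req_dec a b). subst; lra. left; apply G_lt; lra. Qed.

Lemma G_lt_inv a b : 0 <= a <= 1 -> 0 <= b <= 1 -> G a < G b -> a < b.
Proof. intros. destruct (Rlt_or_le a b); auto. pose proof (G_le b a). lra. Qed.

Lemma G_inj a b : 0 <= a <= 1 -> 0 <= b <= 1 -> G a = G b -> a = b.
Proof. intros. destruct (Rtotal_order a b) as [h|[h|h]]; auto.
 pose proof (G_lt a b); lra. pose proof (G_lt b a); lra. Qed.

Lemma G_upper a b : 0 <= a -> a <= b -> b <= 1 -> G b - G a <= b - a.
Proof. intros.
 assert (E: G b - G a = (b-a)*((a*a+a*b+b*b)/3 - (a+b)*(a*a+b*b)/4)) by (unfold G; field).
 rewrite E. assert (0 <= (a+b)*(a*a+b*b)) by (apply Rmult_le_pos; nra).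
 assert (a*a+a*b+b*b <= 3) by nra. nra. Qed.

Lemma G_0 : G 0 = 0. Proof. unfold G; field. Qed.
Lemma G_1 : G 1 = 1/12. Proof. unfold G; field. Qed.
Lemma G_cube m : 0 <= m <= 1 -> m^3/12 <= G m <= m^3/3.
Proof. intros. unfold G. assert (0 <= m^3) by (apply pow_le; lra).
 assert (m^4 = m^3*m) by ring. split; nra. Qed.
Lemma G_one m : G 1 - G m = (1-m)^2*(1+2*m+3*m^2)/12.
Proof. unfold G; field. Qed.

Lemma G_diff_cube m U x : 0 <= m -> m <= U -> U <= x -> x <= 1 ->
  G U - G m >= (1-x)*(U^3-m^3)/3.
Proof. intros.
 assert (E: G U - G m - (1-U)*(U^3-m^3)/3 = (U-m)^2*(U^2+2*U*m+3*m^2)/12) by (unfold G; field).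
 assert (0 <= (U-m)^2*(U^2+2*U*m+3*m^2)/12).
 { assert (0 <= (U-m)^2) by apply pow2_ge_0. assert (0 <= U^2+2*U*m+3*m^2) by nra. 
   apply Rmult_le_pos; [apply Rmult_le_pos|]; lra. }
 assert (0 <= U^3 - m^3). { assert (m^3 <= U^3) by (apply pow_incr; lra). lra. }
 nra. Qed.


Lemma gg_bounds u : 0 <= u <= 1 -> 0 <= gg u <= 1.
Proof. intros; unfold gg. split. apply Rmult_le_pos; [apply pow2_ge_0|lra].
 assert (u^2 <= 1) by nra. nra. Qed.

Lemma gg_lip a b : 0 <= a <= 1 -> 0 <= b <= 1 -> Rabs (gg a - gg b) <= Rabs (a - b).
Proof. intros. assert (E: gg a - gg b = (a-b)*(a+b-(a*a+a*b+b*b))) by (unfold gg; ring).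
 rewrite E, Rabs_mult. rewrite <- (Rmult_1_r (Rabs (a-b))) at 2.
 apply Rmult_le_compat_l. apply Rabs_pos. apply Rabs_le. split; nra. Qed.

Definition Ginv (s : R) : R := epsilon (inhabits 0) (fun u => 0 <= u <= 1 /\ G u = s).

Lemma G_continuity : continuity G.
Proof. unfold G. reg. Qed.

Lemma Ginv_spec s : 0 <= s <= 1/12 -> 0 <= Ginv s <= 1 /\ G (Ginv s) = s.
Proof. intros Hs. unfold Ginv. apply epsilon_spec.
 destruct (IVT_cor (fun u => G u - s) 0 1) as [z [Hz1 Hz2]].
 - intros u. apply continuity_minus. apply G_continuity. apply continuity_const. intros a b; auto.
 - lra.
 - rewrite G_0, G_1. nra.
 - exists z. split; auto. lra.
Qed.

Lemma Ginv_G u : 0 <= u <= 1 -> Ginv (G u) = u.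
Proof. intros. assert (0 <= G u <= 1/12).
 { rewrite <- G_0, <- G_1. split; apply G_le; lra. }
 destruct (Ginv_spec _ H0). apply G_inj; auto. Qed.

Lemma Ginv_lt s1 s2 : 0 <= s1 -> s1 < s2 -> s2 <= 1/12 -> Ginv s1 < Ginv s2.
Proof. intros. destruct (Ginv_spec s1); [lra|]. destruct (Ginv_spec s2); [lra|].
 apply G_lt_inv; auto. lra. Qed.

Lemma Ginv_le s1 s2 : 0 <= s1 -> s1 <= s2 -> s2 <= 1/12 -> Ginv s1 <= Ginv s2.
Proof. intros. destruct (Req_dec s1 s2). subst; lra. left; apply Ginv_lt; lra. Qed.

Lemma Ginv_cont s : 0 < s < 1/12 -> continuity_pt Ginv s.
Proof. intros Hs.
 apply (continuity_pt_recip_interv G Ginv 0 1 Rlt_0_1).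
 - intros; apply G_lt; lra.
 - intros. rewrite G_0, G_1 in *. unfold comp, id. apply Ginv_spec; lra.
 - intros. rewrite G_0, G_1 in *. apply Ginv_spec; lra.
 - intros; apply G_continuity.
 - rewrite G_0, G_1; lra.
Qed.

Lemma G_is_derive y : is_derive G y (gg y).
Proof. unfold G, gg. auto_derive; auto. simpl. field. Qed.

Lemma derivable_G : derivable G.
Proof. intros y. exists (gg y). apply is_derive_Reals, G_is_derive. Qed.

Lemma Ginv_deriv s : 0 < s < 1/12 -> derivable_pt_lim Ginv s (1 / gg (Ginv s)).
Proof. intros Hs.
 destruct (Ginv_spec s) as [H1 H2]; [lra|].
 assert (Hm : Ginv 0 <= Ginv s <= Ginv (1/12)).
 { split; apply Ginv_le; lra. }
 assert (Hpos: 0 < Ginv s).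
 { rewrite <- (Ginv_G 0) by lra. rewrite G_0. apply Ginv_lt; lra. }
 assert (Hlt1: Ginv s < 1).
 { rewrite <- (Ginv_G 1) by lra. rewrite G_1. apply Ginv_lt; lra. }
 assert (Hd : derive_pt G (Ginv s) (derivable_G (Ginv s)) = gg (Ginv s)).
 { apply derive_pt_eq_0. apply is_derive_Reals, G_is_derive. }
 pose proof (derivable_pt_lim_recip_interv G Ginv 0 (1/12) s (fun a _ => derivable_G a)
   (Ginv_cont s Hs) ltac:(lra) Hs Hm) as HH.
 assert (Hgg : gg (Ginv s) <> 0). { unfold gg. apply Rmult_integral_contrapositive; split.
   apply pow_nonzero; lra. lra. }
 cbv beta in HH. rewrite Hd in HH. apply HH.
 - intros. unfold comp, id. apply Ginv_spec; lra.
 - exact Hgg.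
Qed.

Ltac posR := repeat match goal with
  | |- 0 <= _ + _ => apply Rplus_le_le_0_compat
  | |- 0 <= _ * _ => apply Rmult_le_pos
  | |- 0 <= _ ^ _ => apply pow_le
  end; try lra.

Lemma keyE x U : 0 < U -> U <= x -> x < 1 ->
  (2*U - 3*U^2) * (gg x * (1-x) + 2*(G x - G U)) + gg U ^2 > 0.
Proof. intros H0 H1 H2.
 assert (HGU : G U <= G x) by (apply G_le; lra).
 assert (HggU : 0 < gg U). { unfold gg. apply Rmult_lt_0_compat. apply pow_lt; lra. lra. }
 assert (Hggx : 0 <= gg x * (1-x)). { unfold gg. posR. }
 destruct (Rlt_or_le U (2/3)) as [HU|HU].
 - assert (0 < 2*U - 3*U^2) by nra. assert (0 < gg U ^2) by (apply pow_lt; lra). nra.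
 - set (a := 1 - x). set (d := x - U).
   assert (Ha : 0 < a) by (unfold a; lra). assert (Hd : 0 <= d) by (unfold d; lra).
   assert (Hs : 0 <= 1 - 3*(a+d)) by (unfold a, d; lra).
   assert (Hs' : 0 <= 1 - (a+d)/3) by (unfold a, d; lra).
   pose (P3 := (4/3)*d^3 + 4*a*d^2 + 4*a^2*d + 2*a^3).
   pose (Q4 := (7/6)*d^4 + (14/3)*a*d^3 + 7*a^2*d^2 + 4*a^3*d).
   pose (P5 := 2*d^5 + 10*a*d^4 + 20*a^2*d^3 + 22*a^3*d^2 + 16*a^4*d + 6*a^5).
   pose (R6 := (1/6)*d^6 + a*d^5 + (5/2)*a^2*d^4 + 4*a^3*d^3 + (11/3)*a^4*d^2 + (4/3)*a^5*d).
   assert (E : (2*U - 3*U^2) * (gg x * a + 2*(G x - G U)) + gg U ^2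
              = P3*(1-3*(a+d)) + Q4 + P5*(1-(a+d)/3) + R6).
   { unfold P3, Q4, P5, R6, a, d, gg, G. field. }
   idtac.
   assert (0 <= P3) by (unfold P3; posR).
   assert (0 <= Q4) by (unfold Q4; posR).
   assert (0 <= R6) by (unfold R6; posR).
   assert (0 < P5). { unfold P5. assert (0 < 6*a^5) by (apply Rmult_lt_0_compat; [lra| apply pow_lt; lra]).
     assert (0 <= 2*d^5 + 10*a*d^4 + 20*a^2*d^3 + 22*a^3*d^2 + 16*a^4*d) by posR. lra. }
   assert (0 < P5*(1-(a+d)/3)) by (apply Rmult_lt_0_compat; lra).
   assert (0 <= P3*(1-3*(a+d))) by (apply Rmult_le_pos; lra).
   lra.
Qed.

Section Main.
Variables mu k : R.
Hypothesis Hmu : 0 < mu.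
Hypothesis Hk : 0 < k.

Definition hfun x := 2*mu*G x - k^2*(1-x)^2.
Definition cc x := G x - k^2*(1-x)^2/(2*mu).
Definition Kq q := k^2*(1-q^2)/(2*mu).
Definition sx x q := G x - Kq q * (1-x)^2.
Definition U x q := Ginv (sx x q).
Definition F x q := k*(1-x)/(mu * gg (U x q)).

Lemma hfun_lt a b : 0 <= a -> a < b -> b <= 1 -> hfun a < hfun b.
Proof. intros. unfold hfun. pose proof (G_lt a b H H0 H1).
 assert ((1-b)^2 < (1-a)^2) by nra.
 assert (0 < k^2) by (apply pow_lt; lra). nra. Qed.

Lemma yk_sq x : (yk k x)^2 = k^2*(1-x)^2.
Proof. unfold yk. ring. Qed.

Lemma xl_spec : 0 < x_l mu k < 1 /\ hfun (x_l mu k) = 0.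
Proof.
 assert (Hex : exists u, 0 < u < 1 /\ yk k u < 0 /\ (yk k u) ^ 2 = 2 * mu * G u).
 { destruct (IVT_cor hfun 0 1) as [z [Hz1 Hz2]].
   - unfold hfun. intros t. apply continuity_minus. apply continuity_mult. apply continuity_const; intros ? ?; auto.
     apply G_continuity. reg.
   - lra.
   - unfold hfun. rewrite G_0, G_1. assert (0 < k^2) by (apply pow_lt; lra). nra.
   - assert (z <> 0). { intro; subst. unfold hfun in Hz2. rewrite G_0 in Hz2. assert (0 < k^2) by (apply pow_lt; lra). nra. }
     assert (z <> 1). { intro; subst. unfold hfun in Hz2. rewrite G_1 in Hz2. nra. }
     exists z. split; [lra|]. split. unfold yk. nra. rewrite yk_sq. unfold hfun in Hz2. lra. }
 pose proof (epsilon_spec (inhabits 0) _ Hex) as HH. fold (x_l mu k) in HH.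
 destruct HH as [H1 [H2 H3]]. split; auto. unfold hfun. rewrite yk_sq in H3. lra.
Qed.

Definition xl := x_l mu k.

Lemma hfun_pos x : xl < x -> x <= 1 -> 0 < hfun x.
Proof. intros. destruct xl_spec as [[? ?] ?]. unfold xl in *. rewrite <- H3. apply hfun_lt; lra. Qed.

Lemma cc_pos x : xl < x -> x <= 1 -> 0 < cc x.
Proof. intros. pose proof (hfun_pos x H H0). unfold hfun, cc in *.
 apply Rmult_lt_reg_l with (2*mu). lra. field_simplify; [|lra]. lra. Qed.

Lemma xl_bounds : 0 < xl < 1.
Proof. apply xl_spec. Qed.

Lemma Kq_bounds q : 0 <= q <= 1 -> 0 <= Kq q <= k^2/(2*mu).
Proof. intros. unfold Kq. assert (0 < k^2) by (apply pow_lt; lra).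
 assert (0 <= q^2 <= 1) by (split; nra). split.
 apply Rmult_le_pos. nra. left; apply Rinv_0_lt_compat; lra.
 apply Rmult_le_compat_r. left; apply Rinv_0_lt_compat; lra. nra. Qed.

Lemma sx_bounds x q : xl < x < 1 -> 0 <= q <= 1 ->
  0 < cc x <= sx x q /\ sx x q <= G x /\ G x < 1/12.
Proof. intros Hx Hq. pose proof (cc_pos x ltac:(lra) ltac:(lra)). pose proof (Kq_bounds q Hq).
 pose proof xl_bounds.
 assert (0 <= (1-x)^2) by apply pow2_ge_0.
 split; [split; auto|]. unfold sx, cc.
 assert (Kq q * (1-x)^2 <= k^2/(2*mu) * (1-x)^2) by (apply Rmult_le_compat_r; lra).
 unfold Rdiv in *. lra.
 split. unfold sx. nra. rewrite <- G_1. apply G_lt; lra. Qed.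

Lemma U_props x q : xl < x < 1 -> 0 <= q <= 1 ->
  0 < U x q <= x /\ G (U x q) = sx x q /\ 0 < gg (U x q).
Proof. intros Hx Hq. destruct (sx_bounds x q Hx Hq) as [[H1 H2] [H3 H4]].
 pose proof xl_bounds.
 destruct (Ginv_spec (sx x q)) as [H5 H6]; [lra|].
 assert (0 < U x q). { unfold U. rewrite <- (Ginv_G 0) by lra. rewrite G_0. apply Ginv_lt; lra. }
 assert (U x q <= x). { unfold U. apply Rle_trans with (Ginv (G x)); [apply Ginv_le; lra| rewrite Ginv_G; lra]. }
 split; [lra|]. split; auto. unfold gg. apply Rmult_lt_0_compat. apply pow_lt; lra. lra.
Qed.

Lemma m_spec x : xl < x < 1 -> 0 < m_of mu k x < x /\ G (m_of mu k x) = cc x.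
Proof. intros Hx. pose proof xl_bounds. pose proof (cc_pos x ltac:(lra) ltac:(lra)).
 assert (cc x < G x). { unfold cc. assert (0 < k^2*(1-x)^2/(2*mu)).
   { apply Rdiv_lt_0_compat. apply Rmult_lt_0_compat. apply pow_lt; lra. apply pow_lt; lra. lra. } lra. }
 assert (G x < 1/12) by (rewrite <- G_1; apply G_lt; lra).
 assert (Hex : exists m, 0 < m < x /\ 2 * mu * G m = 2 * mu * G x - (yk k x) ^ 2).
 { exists (Ginv (cc x)). destruct (Ginv_spec (cc x)) as [H4 H5]; [lra|].
   split. split. rewrite <- (Ginv_G 0) by lra. rewrite G_0. apply Ginv_lt; lra.
   apply Rlt_le_trans with (Ginv (G x)); [apply Ginv_lt; lra| rewrite Ginv_G; lra].
   rewrite H5, yk_sq. unfold cc. field. lra. }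
 pose proof (epsilon_spec (inhabits 0) _ Hex) as HH. fold (m_of mu k x) in HH.
 destruct HH as [H4 H5]. split; auto. rewrite yk_sq in H5. unfold cc.
 apply Rmult_eq_reg_l with (2*mu); [|lra]. rewrite H5. field. lra.
Qed.

Lemma U_ge_m x q : xl < x < 1 -> 0 <= q <= 1 -> m_of mu k x <= U x q.
Proof. intros Hx Hq. destruct (m_spec x Hx) as [H1 H2]. destruct (U_props x q Hx Hq) as [H3 [H4 H5]].
 destruct (sx_bounds x q Hx Hq) as [[H6 H7] _].
 destruct (Rlt_or_le (U x q) (m_of mu k x)); auto.
 pose proof (G_lt (U x q) (m_of mu k x) ltac:(lra) H ltac:(lra)). lra. Qed.

Lemma F_pos x q : xl < x < 1 -> 0 <= q <= 1 -> k*(1-x)/mu <= F x q.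
Proof. intros Hx Hq. destruct (U_props x q Hx Hq) as [H3 [H4 H5]].
 pose proof (gg_bounds (U x q) ltac:(lra)).
 unfold F. assert (0 < k*(1-x)) by (apply Rmult_lt_0_compat; lra).
 unfold Rdiv. apply Rmult_le_compat_l. lra.
 apply Rinv_le_contravar. apply Rmult_lt_0_compat; lra. nra. Qed.


Lemma cont_Ginv_comp (f : R -> R) t : continuous f t -> 0 < f t < 1/12 ->
  continuous (fun z => Ginv (f z)) t.
Proof. intros Hf Ht. apply continuous_comp with (g := Ginv); auto.
 apply continuity_pt_filterlim. apply Ginv_cont; auto. Qed.

Lemma gg_cont y : continuous gg y.
Proof. apply (ex_derive_continuous (K := R_AbsRing) (V := R_NormedModule)). unfold gg. auto_derive. auto. Qed.

Lemma cont_gg (f : R -> R) t : continuous f t -> continuous (fun z => gg (f z)) t.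
Proof. intros Hf. apply continuous_comp with (g := gg); auto. apply gg_cont. Qed.

Lemma sx_cont x q : continuous (sx x) q.
Proof. apply (ex_derive_continuous (K := R_AbsRing) (V := R_NormedModule)). unfold sx, Kq. auto_derive. auto. Qed.

Lemma F_cont x q : xl < x < 1 -> 0 <= q <= 1 -> continuous (F x) q.
Proof. intros Hx Hq. destruct (sx_bounds x q Hx Hq) as [[H1 H2] [H3 H4]].
 destruct (U_props x q Hx Hq) as [H5 [H6 H7]].
 unfold F. apply continuous_comp with (f := U x) (g := fun v => k * (1 - x) / (mu * gg v)).
 - unfold U. apply cont_Ginv_comp. apply sx_cont. lra.
 - apply (ex_derive_continuous (K := R_AbsRing) (V := R_NormedModule)).
   unfold gg in *. auto_derive. apply Rgt_not_eq. apply Rmult_lt_0_compat; lra.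
Qed.

Lemma F_ex_RInt x a b : xl < x < 1 -> 0 <= a -> a <= b -> b <= 1 -> ex_RInt (F x) a b.
Proof. intros. apply (ex_RInt_continuous (V := R_CompleteNormedModule)). intros. apply F_cont; auto.
 rewrite Rmin_left, Rmax_right in H3; lra. Qed.

Lemma F_upper x q : xl < x < 1 -> 0 <= q <= 1 -> F x q <= k / (mu * (m_of mu k x)^2).
Proof. intros Hx Hq. destruct (U_props x q Hx Hq) as [H5 [H6 H7]].
 pose proof (U_ge_m x q Hx Hq). destruct (m_spec x Hx) as [H8 H9].
 unfold F. assert (gg (U x q) >= m_of mu k x ^2 * (1-x)).
 { unfold gg. assert (m_of mu k x ^2 <= U x q ^2) by (apply pow_incr; lra).
   assert (1 - x <= 1 - U x q) by lra. assert (0 <= m_of mu k x ^2) by apply pow2_ge_0. nra. }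
 assert (0 < m_of mu k x ^2) by (apply pow_lt; lra).
 unfold Rdiv. rewrite (Rinv_mult mu). rewrite (Rinv_mult mu).
 assert (0 < 1 - x) by lra.
 assert (HH: / gg (U x q) <= / (m_of mu k x ^ 2 * (1-x))) by (apply Rinv_le_contravar; [apply Rmult_lt_0_compat|]; lra).
 rewrite Rinv_mult in HH.
 assert (0 < /mu) by (apply Rinv_0_lt_compat; lra).
 assert (0 < / (1-x)) by (apply Rinv_0_lt_compat; lra).
 assert (k * (1 - x) * (/ mu * / gg (U x q)) <= k * (1-x) * (/mu * (/ m_of mu k x ^ 2 * / (1 - x)))).
 { apply Rmult_le_compat_l. nra. apply Rmult_le_compat_l; lra. }
 replace (k * (/ mu * / m_of mu k x ^ 2)) with (k * (1 - x) * (/ mu * (/ m_of mu k x ^ 2 * / (1 - x)))). lra.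
 field. split; lra.
Qed.

Definition Dq x u := (yk k x)^2 + 2*mu*(G u - G x).
Definition Qf x u := sqrt (Dq x u) / (k*(1-x)).
Definition dQ x u := mu * gg u / (k*(1-x)*sqrt (Dq x u)).

Lemma Dq_eq x u : xl < x < 1 -> Dq x u = 2*mu*(G u - G (m_of mu k x)).
Proof. intros Hx. destruct (m_spec x Hx) as [_ H]. unfold Dq. rewrite yk_sq, H. unfold cc. field. lra. Qed.

Lemma Dq_pos x u : xl < x < 1 -> m_of mu k x < u <= 1 -> 0 < Dq x u.
Proof. intros Hx Hu. rewrite Dq_eq by auto. destruct (m_spec x Hx) as [H _].
 pose proof (G_lt (m_of mu k x) u ltac:(lra) ltac:(lra) ltac:(lra)). nra. Qed.

Lemma Qf_x x : xl < x < 1 -> Qf x x = 1.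
Proof. intros Hx. unfold Qf, Dq. rewrite yk_sq. replace (k ^ 2 * (1 - x) ^ 2 + 2 * mu * (G x - G x)) with ((k*(1-x))^2) by ring.
 rewrite sqrt_pow2. field. split; lra. apply Rmult_le_pos; lra. Qed.

Lemma Qf_m x : xl < x < 1 -> Qf x (m_of mu k x) = 0.
Proof. intros Hx. unfold Qf. rewrite Dq_eq by auto. replace (2 * mu * (G (m_of mu k x) - G (m_of mu k x))) with 0 by ring.
 rewrite sqrt_0. unfold Rdiv; ring. Qed.

Lemma Qf_range x u : xl < x < 1 -> m_of mu k x <= u <= x -> 0 <= Qf x u <= 1.
Proof. intros Hx Hu. destruct (m_spec x Hx) as [H1 H2].
 assert (0 <= Dq x u). { rewrite Dq_eq by auto. assert (G (m_of mu k x) <= G u) by (apply G_le; lra). nra. }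
 assert (Dq x u <= (k*(1-x))^2). { unfold Dq. rewrite yk_sq. assert (G u <= G x) by (apply G_le; lra). nra. }
 unfold Qf. assert (0 < k*(1-x)) by (apply Rmult_lt_0_compat; lra). split.
 apply Rdiv_le_0_compat. apply sqrt_pos. auto.
 apply Rmult_le_reg_r with (k*(1-x)); auto. unfold Rdiv. rewrite Rmult_assoc, Rinv_l, Rmult_1_r, Rmult_1_l by lra.
 rewrite <- (sqrt_pow2 (k*(1-x))) by lra. apply sqrt_le_1_alt. auto. Qed.

Lemma U_Qf x u : xl < x < 1 -> m_of mu k x <= u <= x -> U x (Qf x u) = u.
Proof. intros Hx Hu. destruct (m_spec x Hx) as [H1 H2].
 assert (H0 : 0 <= Dq x u). { rewrite Dq_eq by auto. assert (G (m_of mu k x) <= G u) by (apply G_le; lra). nra. }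
 unfold U. replace (sx x (Qf x u)) with (G u). apply Ginv_G. lra.
 unfold sx, Kq, Qf. unfold Rdiv. rewrite Rpow_mult_distr. rewrite pow2_sqrt by auto.
 unfold Dq. rewrite yk_sq. field. split; [lra|]. split; lra. Qed.

Lemma Qf_deriv x u : xl < x < 1 -> 0 < Dq x u -> is_derive (Qf x) u (dQ x u).
Proof. intros Hx HD. unfold Qf, dQ. unfold Dq in *. auto_derive.
 - split. exists (gg u); apply G_is_derive. split; auto.
 - replace (Derive (fun x0 => G x0) u) with (gg u) by (symmetry; apply is_derive_unique; apply G_is_derive).
   replace (yk k x * (yk k x * 1) + 2 * mu * (G u + - G x)) with (yk k x ^ 2 + 2 * mu * (G u - G x)) by ring.
   assert (0 < sqrt (yk k x ^ 2 + 2 * mu * (G u - G x))) by (apply sqrt_lt_R0; lra).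
   field. repeat split; lra.
Qed.

Lemma ball_R (a e b : R) : Rabs (b - a) < e -> ball a e b.
Proof. intros H. exact H. Qed.
Lemma ball_R' (a e b : R) : ball a e b -> Rabs (b - a) < e.
Proof. intros H. exact H. Qed.

Lemma dQ_cont x u : xl < x < 1 -> 0 < Dq x u -> continuous (dQ x) u.
Proof. intros Hx HD. apply (ex_derive_continuous (K := R_AbsRing) (V := R_NormedModule)).
 unfold dQ, gg. unfold Dq in *. auto_derive.
 assert (0 < sqrt (yk k x ^ 2 + 2 * mu * (G u - G x))) by (apply sqrt_lt_R0; lra).
 repeat split; try (exists (gg u); apply G_is_derive).
 - replace (yk k x * (yk k x * 1) + 2 * mu * (G u + - G x)) with (yk k x ^ 2 + 2 * mu * (G u - G x)) by ring. lra.
 - replace (yk k x * (yk k x * 1) + 2 * mu * (G u + - G x)) with (yk k x ^ 2 + 2 * mu * (G u - G x)) by ring.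
   apply Rgt_not_eq. apply Rmult_lt_0_compat; auto. apply Rmult_lt_0_compat; lra.
Qed.

Lemma integrand_eq x u : xl < x < 1 -> m_of mu k x < u <= x ->
  integrand mu k x u = dQ x u * F x (Qf x u).
Proof. intros Hx Hu. unfold F. rewrite U_Qf by (auto; lra).
 pose proof (Dq_pos x u Hx ltac:(lra)). destruct (m_spec x Hx) as [H1 H2].
 assert (0 < gg u). { unfold gg. apply Rmult_lt_0_compat. apply pow_lt; lra. lra. }
 assert (0 < sqrt (Dq x u)) by (apply sqrt_lt_R0; lra).
 unfold integrand, dQ. fold (Dq x u). field. repeat split; lra.
Qed.

Lemma Qf_cont x u : xl < x < 1 -> continuous (Qf x) u.
Proof. intros Hx. unfold Qf.
 apply continuous_comp with (f := fun u => sqrt (Dq x u)) (g := fun v => v / (k*(1-x))).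
 - apply continuous_sqrt_comp. apply (ex_derive_continuous (K := R_AbsRing) (V := R_NormedModule)).
   unfold Dq. auto_derive. exists (gg u); apply G_is_derive.
 - apply (ex_derive_continuous (K := R_AbsRing) (V := R_NormedModule)). auto_derive; easy.
Qed.

Lemma T_rep x : xl < x < 1 ->
  is_RInt_gen (integrand mu k x) (at_right (m_of mu k x)) (at_point x) (RInt (F x) 0 1).
Proof. intros Hx. destruct (m_spec x Hx) as [Hm1 Hm2].
 set (m := m_of mu k x) in *.
 set (If := fun ab : R * R => RInt (F x) (Qf x (fst ab)) 1).
 assert (H1 : filter_prod (at_right m) (at_point x) (fun ab => is_RInt (integrand mu k x) (fst ab) (snd ab) (If ab))).
 { exists (fun b => m < b < x) (fun c => c = x).
   + assert (Hd : 0 < x - m) by lra. exists (mkposreal _ Hd). intros y Hy Hmy. simpl in Hy.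
     apply ball_R' in Hy. apply Rabs_lt_between' in Hy. lra.
   + reflexivity.
   + intros b c Hb Hc. simpl. subst c.
     assert (HH := is_RInt_comp (F x) (Qf x) (dQ x) b x).
     rewrite Qf_x in HH by auto.
     rewrite Rmin_left in HH by lra. rewrite Rmax_right in HH by lra.
     apply (is_RInt_ext (fun y => scal (dQ x y) (F x (Qf x y)))).
     { intros t Ht. rewrite Rmin_left in Ht by lra. rewrite Rmax_right in Ht by lra.
       rewrite integrand_eq; [reflexivity | auto | subst m; lra]. }
     apply HH.
     { intros t Ht. apply F_cont; auto. apply Qf_range; auto. subst m; lra. }
     { intros t Ht. pose proof (Dq_pos x t Hx ltac:(subst m; lra)). split.
       apply Qf_deriv; auto. apply dQ_cont; auto. } }
 assert (H2 : filterlim If (filter_prod (at_right m) (at_point x)) (locally (RInt (F x) 0 1))).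
 { apply filterlim_locally. intros eps.
   set (M := k / (mu * m^2)).
   assert (HM : 0 < M). { unfold M. apply Rdiv_lt_0_compat; auto. apply Rmult_lt_0_compat; auto. apply pow_lt; lra. }
   assert (He : 0 < eps / M) by (apply Rdiv_lt_0_compat; auto; apply cond_pos).
   pose proof (Qf_cont x m Hx) as HC. unfold continuous in HC. rewrite filterlim_locally in HC.
   destruct (HC (mkposreal _ He)) as [d Hd].
   exists (fun b => m < b < x /\ ball (Qf x m) (eps/M) (Qf x b)) (fun c => c = x).
   + assert (Hd' : 0 < Rmin d (x - m)) by (apply Rmin_pos; [apply cond_pos| lra]).
     exists (mkposreal _ Hd'). intros y Hy Hmy. simpl in Hy.
     apply ball_R' in Hy. split.
     { apply Rabs_lt_between' in Hy. pose proof (Rmin_r d (x-m)). lra. }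
     apply (Hd y). apply ball_R. pose proof (Rmin_l d (x-m)). lra.
   + reflexivity.
   + intros b c [Hb1 Hb2] Hc. simpl. apply ball_R' in Hb2. rewrite Qf_m in Hb2 by auto.
     pose proof (Qf_range x b Hx ltac:(subst m; lra)) as Hq.
     set (t := Qf x b) in *. apply ball_R. unfold If; simpl. fold t.
     rewrite <- (RInt_Chasles (F x) 0 t 1) by (apply F_ex_RInt; auto; lra).
     unfold plus; simpl.
     replace (RInt (F x) t 1 - (RInt (F x) 0 t + RInt (F x) t 1)) with (- RInt (F x) 0 t) by ring.
     rewrite Rabs_Ropp.
     assert (Rabs (RInt (F x) 0 t) <= (t - 0) * M).
     { apply abs_RInt_le_const. lra. apply F_ex_RInt; auto; lra.
       intros q Hq'. pose proof (F_pos x q Hx ltac:(lra)). pose proof (F_upper x q Hx ltac:(lra)).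
       assert (0 < k*(1-x)/mu) by (apply Rdiv_lt_0_compat; [apply Rmult_lt_0_compat|]; lra).
       rewrite Rabs_right by lra. exact H0. }
     rewrite Rminus_0_r, Rabs_right in Hb2 by lra.
     assert (t * M < eps). { apply Rmult_lt_reg_r with (/M). apply Rinv_0_lt_compat; auto.
       rewrite Rmult_assoc, Rinv_r, Rmult_1_r by lra. exact Hb2. }
     lra. }
 intros P HP. specialize (H2 P HP). unfold filtermapi.
 generalize (filter_and (F := filter_prod (at_right m) (at_point x)) (fun ab => is_RInt (integrand mu k x) (fst ab) (snd ab) (If ab)) (fun ab => P (If ab)) H1 H2). apply filter_imp. intros ab Hab. exists (If ab). exact Hab.
Qed.

Lemma T_eq x : xl < x < 1 -> T_l mu k x = RInt (F x) 0 1.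
Proof. intros Hx. unfold T_l. apply is_RInt_gen_unique.
 all: try apply T_rep; auto.
 all: try apply Proper_StrongProper, at_right_proper_filter.
 all: try apply Proper_StrongProper, at_point_filter. Qed.

Lemma T_pos x : xl < x < 1 -> 0 < RInt (F x) 0 1.
Proof. intros Hx. apply RInt_gt_0. lra.
 intros q Hq. pose proof (F_pos x q Hx ltac:(lra)).
 assert (0 < k*(1-x)/mu) by (apply Rdiv_lt_0_compat; [apply Rmult_lt_0_compat|]; lra). lra.
 intros q Hq. apply F_cont; auto. Qed.

Lemma cc_le a b : xl < a -> a <= b -> b <= 1 -> cc a <= cc b.
Proof. intros. destruct (Req_dec a b). subst; lra. pose proof xl_bounds.
 pose proof (hfun_lt a b ltac:(lra) ltac:(lra) H1). unfold hfun, cc in *.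
 apply Rmult_le_reg_l with (2*mu). lra. field_simplify; lra. Qed.

Lemma sx_lip x x0 q : 0 <= x <= 1 -> 0 <= x0 <= 1 -> 0 <= q <= 1 ->
  Rabs (sx x q - sx x0 q) <= (1 + k^2/mu) * Rabs (x - x0).
Proof. intros Hx Hx0 Hq. pose proof (Kq_bounds q Hq).
 assert (HG : Rabs (G x - G x0) <= Rabs (x - x0)).
 { destruct (Rle_or_lt x0 x).
   - pose proof (G_upper x0 x ltac:(lra) H0 ltac:(lra)). pose proof (G_le x0 x ltac:(lra) H0 ltac:(lra)).
     rewrite !Rabs_right by lra. lra.
   - pose proof (G_upper x x0 ltac:(lra) ltac:(lra) ltac:(lra)). pose proof (G_le x x0 ltac:(lra) ltac:(lra) ltac:(lra)).
     rewrite !Rabs_left1 by lra. lra. }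
 assert (HK : Rabs (Kq q * ((1-x)^2 - (1-x0)^2)) <= k^2/mu * Rabs (x - x0)).
 { rewrite Rabs_mult. replace ((1-x)^2 - (1-x0)^2) with ((x0 - x)*(2 - x - x0)) by ring.
   rewrite Rabs_mult. rewrite (Rabs_minus_sym x0 x). rewrite (Rabs_right (Kq q)) by lra.
   rewrite (Rabs_right (2 - x - x0)) by lra.
   assert (k^2/mu = 2 * (k^2/(2*mu))) by (field; lra). rewrite H0.
   pose proof (Rabs_pos (x - x0)). 
   apply Rle_trans with (k^2/(2*mu) * (Rabs (x-x0) * 2)).
   apply Rmult_le_compat; try lra. apply Rmult_le_pos; lra. apply Rmult_le_compat_l; lra. lra. }
 unfold sx. replace (G x - Kq q * (1 - x) ^ 2 - (G x0 - Kq q * (1 - x0) ^ 2)) with ((G x - G x0) - Kq q * ((1-x)^2 - (1-x0)^2)) by ring.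
 eapply Rle_trans. apply Rabs_triang. rewrite Rabs_Ropp. lra.
Qed.

Lemma U_lower_sq x q xlo : xl < xlo -> xlo <= x < 1 -> 0 <= q <= 1 -> 3 * cc xlo <= (U x q)^2.
Proof. intros H1 H2 Hq. assert (Hx : xl < x < 1) by lra.
 destruct (U_props x q Hx Hq) as [H3 [H4 H5]]. destruct (sx_bounds x q Hx Hq) as [[H6 H7] _].
 pose proof (G_cube (U x q) ltac:(lra)). pose proof (cc_le xlo x H1 ltac:(lra) ltac:(lra)).
 assert (U x q ^3 <= U x q ^2). { replace (U x q ^3) with (U x q ^2 * U x q) by ring.
   assert (0 <= U x q ^2) by apply pow2_ge_0. nra. }
 lra. Qed.

Lemma U_lip x x0 q xlo xhi : xl < xlo -> xlo <= x <= xhi -> xlo <= x0 <= xhi -> xhi < 1 -> 0 <= q <= 1 ->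
  Rabs (U x q - U x0 q) * (3 * cc xlo * (1 - xhi)) <= (1 + k^2/mu) * Rabs (x - x0).
Proof. intros H1 H2 H3 H4 Hq. pose proof xl_bounds.
 assert (Hx : xl < x < 1) by lra. assert (Hx0 : xl < x0 < 1) by lra.
 pose proof (sx_lip x x0 q ltac:(lra) ltac:(lra) Hq).
 destruct (U_props x q Hx Hq) as [A1 [A2 A3]]. destruct (U_props x0 q Hx0 Hq) as [B1 [B2 B3]].
 pose proof (U_lower_sq x q xlo H1 ltac:(lra) Hq). pose proof (U_lower_sq x0 q xlo H1 ltac:(lra) Hq).
 pose proof (cc_pos xlo H1 ltac:(lra)).
 rewrite <- A2, <- B2 in H0.
 set (u1 := U x q) in *. set (u0 := U x0 q) in *.
 destruct (Rle_or_lt u0 u1).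
 - pose proof (G_lower u0 u1 ltac:(lra) H8 ltac:(lra)).
   assert (0 <= u1^3 - 0) by (rewrite Rminus_0_r; apply pow_le; lra).
   assert (0 <= (u1 - u0)^3) by (apply pow_le; lra).
   assert (u0^2*(1-u1)*(u1-u0) >= 3 * cc xlo * (1 - xhi) * (u1 - u0)).
   { assert (1 - u1 >= 1 - xhi) by lra. assert (0 <= u1 - u0) by lra.
     apply Rle_ge. apply Rmult_le_compat_r; auto. apply Rmult_le_compat; lra. }
   assert (0 <= 3 * cc xlo * (1 - xhi) * (u1 - u0)) by (apply Rmult_le_pos; [apply Rmult_le_pos|]; lra).
   rewrite (Rabs_right (G u1 - G u0)) in H0 by lra. rewrite (Rabs_right (u1 - u0)) by lra. lra.
 - pose proof (G_lower u1 u0 ltac:(lra) ltac:(lra) ltac:(lra)).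
   assert (0 <= (u0 - u1)^3) by (apply pow_le; lra).
   assert (u1^2*(1-u0)*(u0-u1) >= 3 * cc xlo * (1 - xhi) * (u0 - u1)).
   { assert (1 - u0 >= 1 - xhi) by lra. assert (0 <= u0 - u1) by lra.
     apply Rle_ge. apply Rmult_le_compat_r; auto. apply Rmult_le_compat; lra. }
   assert (0 <= 3 * cc xlo * (1 - xhi) * (u0 - u1)) by (apply Rmult_le_pos; [apply Rmult_le_pos|]; lra).
   rewrite (Rabs_left1 (G u1 - G u0)) in H0 by lra. rewrite (Rabs_left1 (u1 - u0)) by lra. lra.
Qed.

Lemma F_lip x x0 q xlo xhi : xl < xlo -> xlo <= x <= xhi -> xlo <= x0 <= xhi -> xhi < 1 -> 0 <= q <= 1 ->
  Rabs (F x q - F x0 q) * (3 * cc xlo * (1 - xhi))^2 <= (k/mu) * (Rabs (x - x0) + Rabs (U x q - U x0 q)).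
Proof. intros H1 H2 H3 H4 Hq. pose proof xl_bounds.
 assert (Hx : xl < x < 1) by lra. assert (Hx0 : xl < x0 < 1) by lra.
 destruct (U_props x q Hx Hq) as [A1 [A2 A3]]. destruct (U_props x0 q Hx0 Hq) as [B1 [B2 B3]].
 pose proof (U_lower_sq x q xlo H1 ltac:(lra) Hq). pose proof (U_lower_sq x0 q xlo H1 ltac:(lra) Hq).
 pose proof (cc_pos xlo H1 ltac:(lra)).
 pose proof (gg_lip (U x0 q) (U x q) ltac:(lra) ltac:(lra)).
 pose proof (gg_bounds (U x0 q) ltac:(lra)).
 set (u1 := U x q) in *. set (u0 := U x0 q) in *.
 set (bg := 3 * cc xlo * (1 - xhi)).
 assert (Hbg : 0 < bg) by (unfold bg; apply Rmult_lt_0_compat; lra).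
 assert (HA : bg <= gg u1). { unfold bg, gg. apply Rmult_le_compat; lra. }
 assert (HB : bg <= gg u0). { unfold bg, gg. apply Rmult_le_compat; lra. }
 assert (E : F x q - F x0 q = (k/mu) * ((x0 - x) * gg u0 + (1 - x0) * (gg u0 - gg u1)) / (gg u1 * gg u0)).
 { unfold F. fold u1 u0. field. repeat split; lra. }
 rewrite E.
 set (N := (x0 - x) * gg u0 + (1 - x0) * (gg u0 - gg u1)).
 assert (HN : Rabs N <= Rabs (x - x0) + Rabs (u1 - u0)).
 { unfold N. eapply Rle_trans. apply Rabs_triang. rewrite !Rabs_mult.
   rewrite (Rabs_minus_sym x0 x). rewrite (Rabs_minus_sym u1 u0).
   rewrite (Rabs_right (gg u0)) by lra. rewrite (Rabs_right (1 - x0)) by lra.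
   pose proof (Rabs_pos (x - x0)). pose proof (Rabs_pos (gg u0 - gg u1)).
   apply Rplus_le_compat. 
   rewrite <- (Rmult_1_r (Rabs (x - x0))) at 2. apply Rmult_le_compat_l; lra.
   apply Rle_trans with (1 * Rabs (gg u0 - gg u1)). apply Rmult_le_compat_r; lra. lra. }
 assert (Hk' : 0 < k / mu) by (apply Rdiv_lt_0_compat; lra).
 unfold Rdiv at 1. rewrite Rabs_mult, Rabs_mult, (Rabs_right (k/mu)) by lra.
 rewrite Rabs_Rinv by (apply Rgt_not_eq; apply Rmult_lt_0_compat; lra).
 rewrite (Rabs_right (gg u1 * gg u0)) by (apply Rle_ge, Rmult_le_pos; lra).
 assert (bg^2 <= gg u1 * gg u0) by (simpl; rewrite Rmult_1_r; apply Rmult_le_compat; lra).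
 assert (0 < gg u1 * gg u0) by (apply Rmult_lt_0_compat; lra).
 assert (Hf : bg^2 * / (gg u1 * gg u0) <= 1).
 { apply Rmult_le_reg_r with (gg u1 * gg u0); [lra|]. rewrite Rmult_assoc, Rinv_l, Rmult_1_r, Rmult_1_l by lra. lra. }
 assert (0 <= bg^2 * / (gg u1 * gg u0)) by (apply Rmult_le_pos; [apply pow2_ge_0| left; apply Rinv_0_lt_compat; lra]).
 pose proof (Rabs_pos N).
 match goal with |- ?L <= _ => replace L with ((k/mu*Rabs N) * (bg^2 * / (gg u1 * gg u0))) by ring end.
 apply Rle_trans with (k/mu*Rabs N * 1).
 apply Rmult_le_compat_l; [apply Rmult_le_pos|]; lra.
 rewrite Rmult_1_r. apply Rmult_le_compat_l; lra.
Qed.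

Lemma T_cont x0 : xl < x0 < 1 -> continuous (T_l mu k) x0.
Proof. intros Hx0. pose proof xl_bounds.
 set (xlo := (xl + x0)/2). set (xhi := (x0 + 1)/2).
 assert (H1 : xl < xlo) by (unfold xlo; lra).
 assert (H2 : xlo < x0 < xhi) by (unfold xlo, xhi; lra).
 assert (H3 : xhi < 1) by (unfold xhi; lra).
 pose proof (cc_pos xlo H1 ltac:(lra)).
 set (bg := 3 * cc xlo * (1 - xhi)).
 assert (Hbg : 0 < bg) by (unfold bg; apply Rmult_lt_0_compat; lra).
 set (C := 1 + k^2/mu).
 assert (HC : 0 < C). { unfold C. assert (0 <= k^2/mu) by (apply Rdiv_le_0_compat; [apply pow2_ge_0|lra]). lra. }
 set (L := (k/mu) * (1 + C/bg) / bg^2).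
 assert (HL : 0 < L). { unfold L. apply Rdiv_lt_0_compat. apply Rmult_lt_0_compat. apply Rdiv_lt_0_compat; lra.
   assert (0 < C/bg) by (apply Rdiv_lt_0_compat; lra). lra. apply pow_lt; lra. }
 assert (HFL : forall x q, xlo <= x <= xhi -> 0 <= q <= 1 -> Rabs (F x q - F x0 q) <= L * Rabs (x - x0)).
 { intros x q Hx Hq.
   pose proof (F_lip x x0 q xlo xhi H1 Hx ltac:(lra) H3 Hq) as HF.
   pose proof (U_lip x x0 q xlo xhi H1 Hx ltac:(lra) H3 Hq) as HU. fold bg in HF, HU. fold C in HU.
   assert (HU' : Rabs (U x q - U x0 q) <= C * Rabs (x - x0) / bg).
   { apply Rmult_le_reg_r with bg; auto. unfold Rdiv. rewrite Rmult_assoc, Rinv_l, Rmult_1_r by lra. lra. }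
   assert (0 < bg^2) by (apply pow_lt; lra).
   apply Rmult_le_reg_r with (bg^2); auto.
   apply Rle_trans with (k / mu * (Rabs (x - x0) + Rabs (U x q - U x0 q))); auto.
   unfold L. replace (k / mu * (1 + C / bg) / bg ^ 2 * Rabs (x - x0) * bg ^ 2) with
     (k / mu * (Rabs (x - x0) + C * Rabs (x - x0) / bg)) by (field; lra).
   apply Rmult_le_compat_l. left; apply Rdiv_lt_0_compat; lra. lra. }
 unfold continuous. apply filterlim_locally. intros eps.
 assert (Hd : 0 < Rmin (Rmin (x0 - xlo) (xhi - x0)) (eps / (L+1))).
 { apply Rmin_pos. apply Rmin_pos; lra. apply Rdiv_lt_0_compat. apply cond_pos. lra. }
 exists (mkposreal _ Hd). intros x Hx. simpl in Hx. apply ball_R' in Hx. apply ball_R.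
 pose proof (Rmin_l (Rmin (x0 - xlo) (xhi - x0)) (eps / (L+1))).
 pose proof (Rmin_r (Rmin (x0 - xlo) (xhi - x0)) (eps / (L+1))).
 pose proof (Rmin_l (x0 - xlo) (xhi - x0)). pose proof (Rmin_r (x0 - xlo) (xhi - x0)).
 assert (Hxr : xlo <= x <= xhi). { apply Rabs_lt_between' in Hx. lra. }
 assert (Hxd : xl < x < 1) by lra.
 rewrite (T_eq x Hxd), (T_eq x0 Hx0).
 pose proof (RInt_minus (F x) (F x0) 0 1 (F_ex_RInt x 0 1 Hxd ltac:(lra) ltac:(lra) ltac:(lra))
    (F_ex_RInt x0 0 1 Hx0 ltac:(lra) ltac:(lra) ltac:(lra))) as HM.
 unfold minus, plus, opp in HM; simpl in HM. 
 replace (RInt (F x) 0 1 - RInt (F x0) 0 1) with (RInt (F x) 0 1 + - RInt (F x0) 0 1) by ring.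
 rewrite <- HM.
 assert (Hb : Rabs (RInt (fun y => F x y + - F x0 y) 0 1) <= (1 - 0) * (L * Rabs (x - x0))).
 { apply abs_RInt_le_const. lra.
   apply (ex_RInt_continuous (V := R_CompleteNormedModule)). intros z Hz.
   rewrite Rmin_left, Rmax_right in Hz by lra.
   apply (continuous_plus (fun y => F x y) (fun y => - F x0 y)). apply F_cont; auto.
   apply (continuous_opp (fun y => F x0 y)). apply F_cont; auto.
   intros t Ht. apply HFL; auto. }
 assert (L * Rabs (x - x0) < eps).
 { apply Rle_lt_trans with (L * (eps / (L+1))). apply Rmult_le_compat_l; lra.
   unfold Rdiv. rewrite <- Rmult_assoc. apply Rmult_lt_reg_r with (L+1). lra.
   rewrite Rmult_assoc, Rinv_l, Rmult_1_r by lra. pose proof (cond_pos eps). nra. }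
 lra.
Qed.

Lemma sx_deriv x q : is_derive (fun z => sx z q) x (gg x + 2 * Kq q * (1 - x)).
Proof. unfold sx. auto_derive.
 - exists (gg x); apply G_is_derive.
 - replace (Derive (fun x0 => G x0) x) with (gg x) by (symmetry; apply is_derive_unique; apply G_is_derive). ring.
Qed.

Lemma U_deriv x q : xl < x < 1 -> 0 <= q <= 1 ->
  is_derive (fun z => U z q) x ((gg x + 2 * Kq q * (1 - x)) / gg (U x q)).
Proof. intros Hx Hq. destruct (sx_bounds x q Hx Hq) as [[H1 H2] [H3 H4]].
 unfold U. pose proof (Ginv_deriv (sx x q) ltac:(lra)) as HD. apply is_derive_Reals in HD.
 pose proof (is_derive_comp Ginv (fun z => sx z q) x _ _ HD (sx_deriv x q)) as HC.
 unfold scal in HC; simpl in HC. unfold mult in HC; simpl in HC.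
 replace ((gg x + 2 * Kq q * (1 - x)) / gg (Ginv (sx x q))) with ((gg x + 2 * Kq q * (1 - x)) * (1 / gg (Ginv (sx x q)))).
 exact HC. unfold Rdiv; ring.
Qed.

Definition Hq x q := gg (U x q) / (1 - x).

Lemma Hq_deriv_pos x q : xl < x < 1 -> 0 <= q <= 1 ->
  exists d, is_derive (fun z => Hq z q) x d /\ d > 0.
Proof. intros Hx Hq0. pose proof (U_deriv x q Hx Hq0) as HU.
 destruct (U_props x q Hx Hq0) as [A1 [A2 A3]].
 set (u := U x q) in *. set (du := (gg x + 2 * Kq q * (1 - x)) / gg u) in *.
 exists (((2*u - 3*u^2) * du * (1 - x) + gg u) / (1 - x)^2). split.
 - unfold Hq, gg. fold u. auto_derive.
   + split; [exists du; exact HU|]. split; [exists du; exact HU|]. split; [lra|auto].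
   + replace (Derive (fun x0 => U x0 q) x) with du by (symmetry; apply is_derive_unique; exact HU).
     change (U x q) with u. field. lra.
 - pose proof (keyE x u ltac:(lra) ltac:(lra) ltac:(lra)) as HK.
   assert (E1 : G x - G u = Kq q * (1-x)^2). { rewrite A2. unfold sx. ring. }
   assert (E2 : (2*u - 3*u^2) * du * (1 - x) + gg u =
     ((2*u - 3*u^2) * (gg x * (1-x) + 2*(G x - G u)) + gg u ^2) / gg u).
   { unfold du. rewrite E1. field. lra. }
   rewrite E2. apply Rdiv_lt_0_compat. apply Rdiv_lt_0_compat; lra. apply pow_lt; lra.
Qed.

Lemma Hq_incr q x1 x2 : 0 <= q <= 1 -> xl < x1 -> x1 < x2 -> x2 < 1 -> Hq x1 q < Hq x2 q.
Proof. intros Hq0 H1 H2 H3.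
 set (df := fun x => Derive (fun z => Hq z q) x).
 apply (incr_function (fun z => Hq z q) (Finite xl) (Finite 1) df); simpl; auto; try lra.
 - intros x Ha Hb. destruct (Hq_deriv_pos x q ltac:(lra) Hq0) as [d [Hd _]].
   unfold df. apply Derive_correct. exists d; exact Hd.
 - intros x Ha Hb. destruct (Hq_deriv_pos x q ltac:(lra) Hq0) as [d [Hd Hp]].
   assert (df x = d) by (apply is_derive_unique; exact Hd). lra.
Qed.

Lemma F_decr q x1 x2 : 0 <= q <= 1 -> xl < x1 -> x1 < x2 -> x2 < 1 -> F x2 q < F x1 q.
Proof. intros Hq0 H1 H2 H3. pose proof (Hq_incr q x1 x2 Hq0 H1 H2 H3).
 destruct (U_props x1 q ltac:(lra) Hq0) as [_ [_ A]]. destruct (U_props x2 q ltac:(lra) Hq0) as [_ [_ B]].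
 unfold Hq in H. unfold F.
 assert (E : forall x, x < 1 -> 0 < gg (U x q) -> k * (1 - x) / (mu * gg (U x q)) = (k/mu) / (gg (U x q) / (1 - x))).
 { intros. field. repeat split; lra. }
 rewrite !E by lra.
 assert (0 < gg (U x1 q) / (1 - x1)) by (apply Rdiv_lt_0_compat; lra).
 unfold Rdiv at 1. unfold Rdiv at 2. apply Rmult_lt_compat_l. apply Rdiv_lt_0_compat; lra.
 apply Rinv_lt_contravar. apply Rmult_lt_0_compat; lra. auto.
Qed.

Lemma T_decr x1 x2 : xl < x1 -> x1 < x2 -> x2 < 1 -> T_l mu k x2 < T_l mu k x1.
Proof. intros. rewrite !T_eq by lra. apply RInt_lt. lra.
 intros; apply F_cont; auto; lra. intros; apply F_cont; auto; lra.
 intros q Hq. apply F_decr; auto; lra. Qed.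

Definition F0 q := k / (sqrt mu * sqrt (mu + k^2 - k^2 * q^2)).
Definition L0 := / sqrt mu * atan (k / sqrt mu).
Definition Phi q := / sqrt mu * atan (k * q / sqrt (mu + k^2 - k^2 * q^2)).

Lemma Phi_deriv q : 0 <= q <= 1 -> is_derive Phi q (F0 q).
Proof. intros Hq. assert (HA : 0 < mu + k^2 - k^2*q^2). { assert (q^2 <= 1) by nra. nra. }
 assert (Hmu' : 0 < sqrt mu) by (apply sqrt_lt_R0; lra).
 unfold Phi, F0.
 replace (mu + k^2 - k^2 * q^2) with (mu + k * (k * 1) + - (k * (k * 1) * (q * (q * 1)))) in * by ring.
 set (A := mu + k * (k * 1) + - (k * (k * 1) * (q * (q * 1)))) in *.
 assert (HS : 0 < sqrt A) by (apply sqrt_lt_R0; lra).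
 assert (HSS : sqrt A * sqrt A = A) by (apply sqrt_sqrt; lra).
 auto_derive.
 - fold A. split; [lra|split; [apply Rgt_not_eq; lra|auto]].
 - fold A. set (S := sqrt A) in *. set (sm := sqrt mu) in *.
   assert (0 <= k * q * (k * q)) by (apply Rmult_le_pos; apply Rmult_le_pos; lra).
   field_simplify_eq. 2: { repeat split; try lra. }
   replace (S^3) with (S * (S*S)) by ring. replace (S^2) with (S*S) by ring. rewrite HSS. unfold A. ring.
Qed.

Lemma F0_cont q : 0 <= q <= 1 -> continuous F0 q.
Proof. intros Hq. assert (HA : 0 < mu + k^2 - k^2*q^2). { assert (q^2 <= 1) by nra. nra. }
 assert (Hmu' : 0 < sqrt mu) by (apply sqrt_lt_R0; lra).
 assert (HS : 0 < sqrt (mu + k^2 - k^2*q^2)) by (apply sqrt_lt_R0; lra).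
 apply (ex_derive_continuous (K := R_AbsRing) (V := R_NormedModule)). unfold F0.
 replace (mu + k^2 - k^2 * q^2) with (mu + k * (k * 1) + - (k * (k * 1) * (q * (q * 1)))) in * by ring.
 auto_derive. repeat split; try lra. apply Rgt_not_eq. apply Rmult_lt_0_compat; lra.
Qed.

Lemma F0_int : is_RInt F0 0 1 L0.
Proof. pose proof (is_RInt_derive Phi F0 0 1) as H.
 rewrite Rmin_left, Rmax_right in H by lra.
 replace L0 with (minus (Phi 1) (Phi 0)). apply H.
 intros; apply Phi_deriv; auto. intros; apply F0_cont; auto.
 unfold minus, plus, opp; simpl. unfold Phi, L0.
 replace (mu + k ^ 2 - k ^ 2 * 1 ^ 2) with mu by ring.
 replace (k * 0 / sqrt (mu + k ^ 2 - k ^ 2 * 0 ^ 2)) with 0 by (unfold Rdiv; ring).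
 rewrite atan_0. replace (k * 1) with k by ring. ring.
Qed.

Lemma G_diff_up u x : 0 <= u -> u <= x -> x <= 1 -> G x - G u <= ((1-u)^2 - (1-x)^2)/2.
Proof. intros. 
 assert (E : ((1-u)^2 - (1-x)^2)/2 - (G x - G u) = (x-u)*((x-u)^2*(2/3 - (x-u)/4) + (1-x)*(x-u)*(2-(x-u)) + (1-x)^2*(2-(1-x)-3/2*(x-u)))).
 { unfold G. field. }
 assert (0 <= (x-u)*((x-u)^2*(2/3 - (x-u)/4) + (1-x)*(x-u)*(2-(x-u)) + (1-x)^2*(2-(1-x)-3/2*(x-u)))).
 { apply Rmult_le_pos. lra. posR. } lra. Qed.

Lemma G_diff_low u x : 0 <= u -> u <= x -> x <= 1 -> G x - G u >= u^2*((1-u)^2 - (1-x)^2)/2.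
Proof. intros.
 assert (E : G x - G u - u^2*((1-u)^2 - (1-x)^2)/2 = (x-u)^2*((x-u)*(1/3 - (x-u)/4) + (1-x)*(1-(x-u)-(1-x)))).
 { unfold G. field. }
 assert (0 <= (x-u)^2*((x-u)*(1/3 - (x-u)/4) + (1-x)*(1-(x-u)-(1-x)))).
 { apply Rmult_le_pos. apply pow2_ge_0. posR. } lra. Qed.

Lemma sq_le a b : 0 <= a -> 0 <= b -> a^2 <= b^2 -> a <= b.
Proof. intros. destruct (Rle_or_lt a b); auto. nra. Qed.

Lemma F0_eq q : 0 <= q <= 1 -> F0 q = k / (mu * sqrt (1 + 2 * Kq q)).
Proof. intros Hq. pose proof (Kq_bounds q Hq). unfold F0.
 replace (mu + k^2 - k^2*q^2) with (mu * (1 + 2 * Kq q)) by (unfold Kq; field; lra).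
 rewrite sqrt_mult by lra. rewrite <- Rmult_assoc, sqrt_sqrt by lra. reflexivity. Qed.

Lemma F_bounds x q : xl < x < 1 -> 0 <= q <= 1 ->
  m_of mu k x * F0 q <= F x q <= F0 q / (m_of mu k x)^2.
Proof. intros Hx Hq. pose proof (Kq_bounds q Hq). destruct (m_spec x Hx) as [Hm1 Hm2].
 destruct (U_props x q Hx Hq) as [A1 [A2 A3]]. pose proof (U_ge_m x q Hx Hq).
 rewrite F0_eq by auto.
 set (m := m_of mu k x) in *. set (u := U x q) in *. set (K := Kq q) in *.
 set (s := sqrt (1 + 2*K)).
 assert (Hs : 1 <= s). { unfold s. apply Rle_trans with (sqrt 1); [rewrite sqrt_1; lra | apply sqrt_le_1_alt; lra]. }
 assert (Hss : s^2 = 1 + 2*K) by (unfold s; rewrite pow2_sqrt; lra).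
 assert (E1 : G x - G u = K * (1-x)^2). { rewrite A2. unfold sx. fold K. ring. }
 pose proof (G_diff_up u x ltac:(lra) ltac:(lra) ltac:(lra)).
 pose proof (G_diff_low u x ltac:(lra) ltac:(lra) ltac:(lra)).
 assert (Hw1 : (1-x)*s <= 1-u).
 { apply sq_le. apply Rmult_le_pos; lra. lra. rewrite Rpow_mult_distr, Hss. nra. }
 assert (Hw2 : m*(1-u) <= (1-x)*s).
 { apply sq_le. apply Rmult_le_pos; lra. apply Rmult_le_pos; lra. rewrite !Rpow_mult_distr, Hss.
   assert (m^2 <= u^2) by (apply pow_incr; lra).
   assert (0 <= (1-u)^2 - (1-x)^2) by nra.
   assert (m^2 * ((1-u)^2 - (1-x)^2) <= 2*K*(1-x)^2) by nra.
   assert (m^2 <= 1) by nra.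
   assert (m^2*(1-x)^2 <= 1*(1-x)^2) by (apply Rmult_le_compat_r; [apply pow2_ge_0|lra]). lra. }
 unfold F. fold u.
 assert (Hgg : gg u = u^2 * (1-u)) by reflexivity. rewrite Hgg.
 assert (0 < m^2) by (apply pow_lt; lra). assert (m^2 <= u^2) by (apply pow_incr; lra).
 assert (u^2 <= 1) by nra.
 split.
 -
   replace (m * (k / (mu * s))) with (k * (1-x) / (mu * ((1-x)*s/m))) by (field; repeat split; lra).
   unfold Rdiv. apply Rmult_le_compat_l. apply Rmult_le_pos; lra.
   apply Rinv_le_contravar. apply Rmult_lt_0_compat; [lra|]. apply Rmult_lt_0_compat; lra.
   apply Rmult_le_compat_l. lra.
   apply Rle_trans with (1 - u). rewrite <- (Rmult_1_l (1-u)) at 2. apply Rmult_le_compat_r; lra.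
   apply Rmult_le_reg_l with m. lra. field_simplify; lra.
 -
   replace (k / (mu * s) / m^2) with (k * (1-x) / (mu * (m^2 * ((1-x)*s)))) by (field; repeat split; lra).
   unfold Rdiv. apply Rmult_le_compat_l. apply Rmult_le_pos; lra.
   apply Rinv_le_contravar. apply Rmult_lt_0_compat; [lra|]. apply Rmult_lt_0_compat; [lra|]. apply Rmult_lt_0_compat; lra.
   apply Rmult_le_compat_l. lra. apply Rmult_le_compat; try lra. apply Rmult_le_pos; lra.
Qed.

Lemma T_bounds x : xl < x < 1 -> m_of mu k x * L0 <= T_l mu k x <= L0 / (m_of mu k x)^2.
Proof. intros Hx. rewrite T_eq by auto. destruct (m_spec x Hx) as [Hm1 _].
 set (m := m_of mu k x) in *.
 assert (HF0 : ex_RInt F0 0 1) by (exists L0; apply F0_int).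
 assert (HL0 : RInt F0 0 1 = L0) by (apply is_RInt_unique; apply F0_int).
 assert (0 < m^2) by (apply pow_lt; lra).
 split.
 - replace (m * L0) with (RInt (fun q => m * F0 q) 0 1).
   apply RInt_le. lra. apply (ex_RInt_scal F0 0 1 m HF0). apply F_ex_RInt; auto; lra.
   intros q Hq. apply F_bounds; auto; lra.
   rewrite <- HL0. apply (RInt_scal F0 0 1 m HF0).
 - replace (L0 / m^2) with (RInt (fun q => / m^2 * F0 q) 0 1).
   apply RInt_le. lra. apply F_ex_RInt; auto; lra. apply (ex_RInt_scal F0 0 1 (/ m^2) HF0).
   intros q Hq. rewrite Rmult_comm. apply F_bounds; auto; lra.
   rewrite <- HL0. etransitivity. apply (RInt_scal F0 0 1 (/ m^2) HF0). unfold scal; simpl. unfold mult; simpl. unfold Rdiv; ring.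
Qed.

Lemma m_close1 x : xl < x < 1 -> (1 - m_of mu k x)^2 <= 6 * (1 + k^2/mu) * (1-x)^2.
Proof. intros Hx. destruct (m_spec x Hx) as [Hm1 Hm2]. pose proof xl_bounds.
 set (m := m_of mu k x) in *.
 pose proof (G_one m). pose proof (G_one x).
 assert (HA : (1-m)^2 / 12 <= G 1 - G m).
 { rewrite H0. assert (0 <= (1-m)^2) by apply pow2_ge_0. assert (1 <= 1 + 2*m + 3*m^2) by nra. 
   unfold Rdiv. apply Rmult_le_compat_r. lra. nra. }
 assert (HB : G 1 - G x <= (1-x)^2 / 2).
 { rewrite H1. assert (0 <= (1-x)^2) by apply pow2_ge_0. assert (1 + 2*x + 3*x^2 <= 6) by nra.
   unfold Rdiv. nra. }
 rewrite Hm2 in HA. unfold cc in HA.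
 assert (E : k ^ 2 * (1 - x) ^ 2 / (2 * mu) = (k^2/mu) * (1-x)^2 / 2) by (field; lra).
 rewrite E in HA. lra.
Qed.

Lemma m_lim1 : filterlim (m_of mu k) (at_left 1) (locally 1).
Proof. apply filterlim_locally. intros eps. pose proof xl_bounds.
 set (C := 6 * (1 + k^2/mu)).
 assert (HC : 0 < C). { unfold C. assert (0 <= k^2/mu) by (apply Rdiv_le_0_compat; [apply pow2_ge_0|lra]). lra. }
 pose proof (cond_pos eps) as He.
 assert (Hd : 0 < Rmin (1 - xl) (eps / (C + 1))) by (apply Rmin_pos; [lra|apply Rdiv_lt_0_compat; lra]).
 exists (mkposreal _ Hd). intros y Hy Hy1. simpl in Hy. apply ball_R' in Hy. apply ball_R.
 pose proof (Rmin_l (1 - xl) (eps / (C + 1))). pose proof (Rmin_r (1 - xl) (eps / (C + 1))).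
 apply Rabs_lt_between' in Hy.
 assert (Hx : xl < y < 1) by lra.
 pose proof (m_close1 y Hx). fold C in H2. destruct (m_spec y Hx) as [Hm1 _].
 assert (H1y : 1 - y < eps / (C+1)) by lra.
 assert (Hsq : C * (1-y)^2 < eps^2).
 { assert (0 < 1 - y) by lra.
   assert ((1-y)^2 < (eps/(C+1))^2) by (assert (0 < eps/(C+1)) by (apply Rdiv_lt_0_compat; lra); nra).
   assert ((eps/(C+1))^2 * C <= eps^2). { replace ((eps/(C+1))^2 * C) with (eps^2 * (C / ((C+1)*(C+1)))) by (field; lra).
     assert (C / ((C+1)*(C+1)) <= 1). { apply Rmult_le_reg_r with ((C+1)*(C+1)). nra. unfold Rdiv. rewrite Rmult_assoc, Rinv_l by nra. nra. }
     assert (0 <= eps^2) by apply pow2_ge_0. nra. }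
   nra. }
 rewrite Rabs_left1 by lra.
 assert ((1 - m_of mu k y)^2 < eps^2) by lra.
 assert (1 - m_of mu k y < eps) by nra. lra.
Qed.

Lemma T_lim1 : filterlim (T_l mu k) (at_left 1) (locally L0).
Proof. pose proof xl_bounds.
 apply (filterlim_le_le (F := at_left 1) (fun x => m_of mu k x * L0) (T_l mu k) (fun x => L0 / (m_of mu k x)^2) (Finite L0)).
 - assert (Hd : 0 < 1 - xl) by lra. exists (mkposreal _ Hd). intros y Hy Hy1. simpl in Hy.
   apply ball_R' in Hy. apply Rabs_lt_between' in Hy. apply T_bounds. lra.
 - replace (Finite L0) with (Finite (1 * L0)) by (f_equal; ring).
   assert (HC : continuous (fun t => t * L0) 1).
   { apply (ex_derive_continuous (K := R_AbsRing) (V := R_NormedModule) (fun t => t * L0)). auto_derive. auto. }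
   exact (filterlim_comp _ _ _ (m_of mu k) (fun t => t * L0) (at_left 1) (locally 1) (locally (1 * L0)) m_lim1 HC).
 - replace (Finite L0) with (Finite (L0 / 1^2)) by (f_equal; field).
   assert (HC : continuous (fun t => L0 / t^2) 1).
   { apply (ex_derive_continuous (K := R_AbsRing) (V := R_NormedModule) (fun t => L0 / t^2)). auto_derive. lra. }
   exact (filterlim_comp _ _ _ (m_of mu k) (fun t => L0 / t^2) (at_left 1) (locally 1) (locally (L0 / 1^2)) m_lim1 HC).
Qed.

Definition K0 := k^2/(2*mu).

Lemma K0_pos : 0 < K0.
Proof. unfold K0. apply Rdiv_lt_0_compat. apply pow_lt; lra. lra. Qed.

Lemma U_small x q : xl < x < 1 -> 0 <= q <= 1 ->
  3 * K0 * (1-x) * q^2 <= (m_of mu k x)^3 -> U x q <= 2 * m_of mu k x.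
Proof. intros Hx Hq Hs. destruct (m_spec x Hx) as [Hm1 Hm2].
 destruct (U_props x q Hx Hq) as [A1 [A2 A3]]. pose proof (U_ge_m x q Hx Hq).
 set (m := m_of mu k x) in *. set (u := U x q) in *.
 assert (E : G u - G m = K0 * q^2 * (1-x)^2). { rewrite A2, Hm2. unfold sx, cc, Kq, K0. field. lra. }
 pose proof (G_diff_cube m u x ltac:(lra) ltac:(lra) ltac:(lra) ltac:(lra)).
 assert (Hc : (1-x) * (u^3 - m^3) <= (1-x) * (3 * K0 * q^2 * (1-x))) by lra.
 apply Rmult_le_reg_l in Hc; [|lra].
 assert (u^3 <= 2 * m^3) by lra.
 destruct (Rle_or_lt u (2*m)); auto.
 assert ((2*m)^3 < u^3).
 { replace (u^3 - (2*m)^3) with ((u - 2*m) * (u^2 + 2*m*u + 4*m^2)) by ring. 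
   assert (0 < u^2 + 2*m*u + 4*m^2) by nra. 
   assert (0 < (u - 2*m) * (u^2 + 2*m*u + 4*m^2)) by (apply Rmult_lt_0_compat; lra).
   assert (u^3 - (2*m)^3 = (u - 2*m) * (u^2 + 2*m*u + 4*m^2)) by ring. lra. }
 assert (0 < m^3) by (apply pow_lt; lra). nra.
Qed.

Lemma T_lower x : xl < x < 1 -> (m_of mu k x)^3 <= 3 * K0 * (1-x) ->
  sqrt ((m_of mu k x)^3 / (3 * K0 * (1-x))) * (k * (1-x) / (4 * mu * (m_of mu k x)^2)) <= T_l mu k x.
Proof. intros Hx Hs. rewrite T_eq by auto. destruct (m_spec x Hx) as [Hm1 Hm2]. pose proof K0_pos.
 set (m := m_of mu k x) in *.
 assert (Hc : 0 < 3 * K0 * (1-x)) by (apply Rmult_lt_0_compat; lra).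
 set (q0 := sqrt (m^3 / (3 * K0 * (1-x)))).
 assert (Hq0 : 0 <= q0) by apply sqrt_pos.
 assert (Hq0sq : q0^2 = m^3 / (3 * K0 * (1-x))) by (unfold q0; rewrite pow2_sqrt; [auto| apply Rdiv_le_0_compat; [apply pow_le|]; lra]).
 assert (Hq01 : q0 <= 1). { apply sq_le; try lra. rewrite Hq0sq. rewrite pow1. 
   apply Rmult_le_reg_r with (3 * K0 * (1-x)); auto. unfold Rdiv. rewrite Rmult_assoc, Rinv_l, Rmult_1_r by lra. lra. }
 set (c := k * (1-x) / (4 * mu * m^2)).
 assert (0 < m^2) by (apply pow_lt; lra).
 assert (Hcp : 0 < c) by (unfold c; apply Rdiv_lt_0_compat; [apply Rmult_lt_0_compat|apply Rmult_lt_0_compat]; lra).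
 rewrite <- (RInt_Chasles (F x) 0 q0 1) by (apply F_ex_RInt; auto; lra).
 unfold plus; simpl.
 assert (0 <= RInt (F x) q0 1).
 { apply RInt_ge_0. lra. apply F_ex_RInt; auto; lra. intros q Hq.
   pose proof (F_pos x q Hx ltac:(lra)). assert (0 < k*(1-x)/mu) by (apply Rdiv_lt_0_compat; [apply Rmult_lt_0_compat|]; lra). lra. }
 assert (q0 * c <= RInt (F x) 0 q0).
 { replace (q0 * c) with (RInt (fun _ => c) 0 q0).
   apply RInt_le. lra. apply ex_RInt_const. apply F_ex_RInt; auto; lra.
   intros q Hq. destruct (U_props x q Hx ltac:(lra)) as [A1 [A2 A3]].
   assert (Hu : U x q <= 2 * m). { apply U_small; auto. lra.
     assert (q^2 <= q0^2) by (apply pow_incr; lra). rewrite Hq0sq in H2.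
     apply Rmult_le_reg_r with (/ (3 * K0 * (1-x))). apply Rinv_0_lt_compat; lra.
     replace (3 * K0 * (1 - x) * q ^ 2 * / (3 * K0 * (1 - x))) with (q^2) by (field; lra). exact H2. }
   unfold F, c. assert (0 < 1 - U x q) by lra. unfold gg in *.
   assert (U x q ^2 * (1 - U x q) <= 4 * m^2).
   { assert (U x q ^2 <= (2*m)^2) by (apply pow_incr; lra). assert (U x q^2 * (1 - U x q) <= U x q ^2 * 1).
     apply Rmult_le_compat_l; [apply pow2_ge_0|lra]. nra. }
   unfold Rdiv. apply Rmult_le_compat_l. apply Rmult_le_pos; lra.
   apply Rinv_le_contravar. apply Rmult_lt_0_compat; [lra|]. apply Rmult_lt_0_compat; [apply pow_lt|]; lra.
   nra.
   rewrite RInt_const. unfold scal; simpl; unfold mult; simpl. ring. }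
 lra.
Qed.

Lemma cc_xl : cc xl = 0.
Proof. destruct xl_spec as [_ H]. unfold hfun in H. unfold cc. fold xl in H.
 apply Rmult_eq_reg_l with (2*mu); [|lra]. field_simplify; lra. Qed.

Lemma cc_small x : xl < x -> x <= 1 -> cc x <= (1 + k^2/mu) * (x - xl).
Proof. intros. pose proof xl_bounds. pose proof cc_xl.
 pose proof (G_upper xl x ltac:(lra) ltac:(lra) H0).
 unfold cc in *.
 assert (E : k ^ 2 * (1 - x) ^ 2 / (2 * mu) = k ^ 2 * (1 - xl) ^ 2 / (2 * mu) - (k^2/mu) * (x - xl) * ((2 - x - xl)/2)) by (field; lra).
 rewrite E.
 assert (0 <= k^2/mu) by (apply Rdiv_le_0_compat; [apply pow2_ge_0|lra]).
 assert ((k^2/mu) * (x - xl) * ((2 - x - xl)/2) <= (k^2/mu) * (x - xl)).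
 { rewrite <- (Rmult_1_r ((k^2/mu) * (x - xl))) at 2. apply Rmult_le_compat_l. apply Rmult_le_pos; lra. lra. }
 nra.
Qed.

Lemma T_big M : 0 < M -> at_right xl (fun x => M < T_l mu k x).
Proof. intros HM. pose proof xl_bounds. pose proof K0_pos.
 set (amin := (1 - xl)/2).
 assert (Ha : 0 < amin) by (unfold amin; lra).
 set (eta := Rmin (Rmin 1 (3*K0*amin)) (amin / (24*mu*(M^2+1)))).
 assert (He1 : eta <= 1) by (unfold eta; pose proof (Rmin_l (Rmin 1 (3*K0*amin)) (amin / (24*mu*(M^2+1)))); pose proof (Rmin_l 1 (3*K0*amin)); lra).
 assert (He2 : eta <= 3*K0*amin) by (unfold eta; pose proof (Rmin_l (Rmin 1 (3*K0*amin)) (amin / (24*mu*(M^2+1)))); pose proof (Rmin_r 1 (3*K0*amin)); lra).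
 assert (He3 : eta <= amin / (24*mu*(M^2+1))) by (unfold eta; apply Rmin_r).
 assert (HM2 : 0 < 24*mu*(M^2+1)) by (assert (0 <= M^2) by apply pow2_ge_0; apply Rmult_lt_0_compat; lra).
 assert (He : 0 < eta). { unfold eta. apply Rmin_pos. apply Rmin_pos. lra. apply Rmult_lt_0_compat; lra.
   apply Rdiv_lt_0_compat; lra. }
 set (C := 1 + k^2/mu).
 assert (HC : 0 < C). { unfold C. assert (0 <= k^2/mu) by (apply Rdiv_le_0_compat; [apply pow2_ge_0|lra]). lra. }
 assert (He3' : 0 < eta^3) by (apply pow_lt; lra).
 assert (Hd : 0 < Rmin amin (eta^3 / (24 * C))) by (apply Rmin_pos; [lra| apply Rdiv_lt_0_compat; lra]).
 exists (mkposreal _ Hd). intros x Hx Hxl. simpl in Hxl. apply ball_R' in Hx. change (pos (mkposreal _ Hd)) with (Rmin amin (eta^3 / (24 * C))) in Hx. apply Rabs_lt_between' in Hx.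
 pose proof (Rmin_l amin (eta^3 / (24 * C))). pose proof (Rmin_r amin (eta^3 / (24 * C))).
 assert (Hamin : amin = (1 - xl)/2) by reflexivity.
 assert (Hx1 : xl < x < 1) by lra.
 assert (Hax : amin < 1 - x) by lra.
 destruct (m_spec x Hx1) as [Hm1 Hm2]. set (m := m_of mu k x) in *.
 pose proof (cc_small x ltac:(lra) ltac:(lra)) as Hccs. fold C in Hccs.
 assert (Hcc : cc x < eta^3 / 12).
 { apply Rle_lt_trans with (C * (x - xl)). auto.
   apply Rle_lt_trans with (C * (eta^3/(24*C))). apply Rmult_le_compat_l; lra.
   replace (C * (eta ^ 3 / (24 * C))) with (eta^3/24) by (field; lra). lra. }
 pose proof (G_cube m ltac:(lra)).
 assert (Hm3 : m^3 < eta^3) by lra.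
 assert (Hmeta : m < eta).
 { destruct (Rlt_or_le m eta); auto.
   assert (eta^3 <= m^3) by (apply pow_incr; lra). lra. }
 assert (Hcond : m^3 <= 3 * K0 * (1-x)).
 { assert (m^3 <= m). { replace (m^3) with (m * m^2) by ring. assert (m^2 <= 1) by nra. nra. }
   assert (3*K0*amin <= 3*K0*(1-x)) by (apply Rmult_le_compat_l; lra). lra. }
 pose proof (T_lower x Hx1 Hcond) as HT. fold m in HT.
 set (B := sqrt (m ^ 3 / (3 * K0 * (1 - x))) * (k * (1 - x) / (4 * mu * m ^ 2))) in *.
 assert (HB0 : 0 <= B). { unfold B. apply Rmult_le_pos. apply sqrt_pos.
   apply Rdiv_le_0_compat. apply Rmult_le_pos; lra. apply Rmult_lt_0_compat. lra. apply pow_lt; lra. }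
 assert (HB2 : B^2 = (1-x) / (24 * mu * m)).
 { unfold B. rewrite Rpow_mult_distr. rewrite pow2_sqrt.
   unfold K0. field. repeat split; lra.
   apply Rdiv_le_0_compat. apply pow_le; lra. apply Rmult_lt_0_compat; lra. }
 assert (HB3 : M^2 < B^2).
 { rewrite HB2. apply Rlt_le_trans with (M^2 + 1). lra.
   apply Rmult_le_reg_r with (24 * mu * m). apply Rmult_lt_0_compat; lra.
   replace ((1 - x) / (24 * mu * m) * (24 * mu * m)) with (1-x) by (field; lra).
   assert (m * (24*mu*(M^2+1)) <= amin).
   { apply Rle_trans with (eta * (24*mu*(M^2+1))). apply Rmult_le_compat_r; lra.
     apply Rmult_le_reg_r with (/ (24*mu*(M^2+1))). apply Rinv_0_lt_compat; lra.
     rewrite Rmult_assoc, Rinv_r, Rmult_1_r by lra. exact He3. }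
   nra. }
 assert (M < B) by nra. lra.
Qed.

Lemma T_lim_xl : filterlim (T_l mu k) (at_right xl) (Rbar_locally p_infty).
Proof. intros P [M0 HP]. unfold filtermap.
 apply filter_imp with (fun x => Rmax M0 0 + 1 < T_l mu k x).
 intros x Hx. apply HP. pose proof (Rmax_l M0 0). lra.
 apply T_big. pose proof (Rmax_r M0 0). lra.
Qed.
End Main.

Theorem proposition3p2 (mu k : R) (Hmu : 0 < mu) (Hk : 0 < k) :
  (forall x, x_l mu k < x < 1 ->
     is_RInt_gen (integrand mu k x) (at_right (m_of mu k x)) (at_point x)
       (T_l mu k x) /\ 0 < T_l mu k x) /\
  (forall x, x_l mu k < x < 1 -> continuous (T_l mu k) x) /\
  (forall x1 x2, x_l mu k < x1 -> x1 < x2 -> x2 < 1 ->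
     T_l mu k x2 < T_l mu k x1) /\
  filterlim (T_l mu k) (at_left 1)
    (locally (/ sqrt mu * atan (k / sqrt mu))) /\
  filterlim (T_l mu k) (at_right (x_l mu k)) (Rbar_locally p_infty).
Proof.
 split; [|split; [|split; [|split]]].
 - intros x Hx. rewrite (T_eq mu k Hmu Hk x Hx). split.
   apply (T_rep mu k Hmu Hk x Hx). apply (T_pos mu k Hmu Hk x Hx).
 - intros x Hx. apply (T_cont mu k Hmu Hk x Hx).
 - intros x1 x2 H1 H2 H3. apply (T_decr mu k Hmu Hk x1 x2 H1 H2 H3).
 - apply (T_lim1 mu k Hmu Hk).
 - apply (T_lim_xl mu k Hmu Hk).
Qed.
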